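(* Fix $K\ge 1$. There is a constant $C_K$ depending only on $K$ such that, for all integers $n\ge K$ and $N>1$, all $\epsilon\in(0,1)$ and all $\delta\in(0,1/2]$, the total number of pulls made by MedianElimination (described in the context) with parameters $K,\epsilon,\delta$ on any MAB-BP instance with $n$ arms and reward lists of length $N$ is at most $$C_K\,\frac{n\sqrt{N}}{\epsilon}\sqrt{\log\frac1\delta}\,,$$ i.e. the time complexity is $O\!\left(\frac{n\sqrt N}{\epsilon}\sqrt{\log(1/\delta)}\right)$.
   Context: Multi-Armed Bandit with Bounded Pulls (MAB-BP): there are $n$ arms $a_1,\dots,a_n$; arm $a_i$ has a reward list $R_i=(R_i^{(1)},\dots,R_i^{(N)})$ with $R_i^{(j)}\in[0,1]$, and true mean $p_i=\frac1N\sum_{j=1}^N R_i^{(j)}$. Each pull of arm $a_i$ returns a value drawn uniformly at random without replacement from the entries of $R_i$ not yet returned. Define for $u>0$ $$m(u)=\min\left\{\frac{u+1}{1+\frac{u}{N}},\ \frac{u+\frac{u}{N}}{1+\frac{u}{N}}\right\}.$$ Algorithm MedianElimination (input $K\ge1$, $\epsilon>0$, $\delta>0$, arm set $A$): set $S_1=A$, $\epsilon_1=\epsilon/4$, $\delta_1=\delta/2$, $l=1$, $t_0=0$. While $|S_l|>K$: set $$t_l=\left\lceil m\!\left(\frac{2}{\epsilon_l^2}\log\frac{2(|S_l|-K)}{\delta_l\left(\left\lfloor\frac{|S_l|-K}{2}\right\rfloor+1\right)}\right)\right\rceil;$$ pull every arm $a\in S_l$ an additional $t_l-t_{l-1}$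 times, and let $\hat p^l_a$ be the empirical mean of all $t_l$ rewards obtained from $a$ since the start; remove from $S_l$ the $\left\lceil\frac{|S_l|-K}{2}\right\rceil$ arms with the smallest values of $\hat p^l_a$ to obtain $S_{l+1}$; set $\epsilon_{l+1}=\frac34\epsilon_l$, $\delta_{l+1}=\frac12\delta_l$, $l\leftarrow l+1$. When the loop ends, return $S_l$. *)

(* Defs.v *)
From Stdlib Require Import Reals Lra Lia Arith.
Open Scope R_scope.

Definition m_fun (N : nat) (u : R) : R :=
  Rmin ((u + 1) / (1 + u / INR N)) ((u + u / INR N) / (1 + u / INR N)).

(* ceiling of a real, as an integer: up x is the unique integer with
   x < up x <= x + 1. *)
Definition ceilZ (x : R) : Z :=
  let z := up x in
  if Req_EM_T (IZR z - 1) x then (z - 1)%Z else z.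

Definition t_round (K N s : nat) (epsl deltal : R) : nat :=
  Z.to_nat (ceilZ (m_fun N
    ((2 / (epsl ^ 2)) *
     ln ((2 * INR (s - K)) / (deltal * INR ((s - K) / 2 + 1)))))).

(* Number of pulls made by the rounds of MedianElimination, starting from a
   round with |S_l| = s, current eps_l, delta_l, and t_{l-1} = tprev.
   In each round every arm of S_l is pulled t_l - t_{l-1} additional times,
   then ceil((|S_l|-K)/2) = (s - K + 1)/2 arms are removed.
   [fuel] bounds the number of rounds (each round removes at least one arm,
   so fuel = n suffices). *)
Fixpoint me_pulls (fuel K N s : nat) (epsl deltal : R) (tprev : nat) : nat :=
  match fuel with
  | O => O
  | S f =>
      if (K <? s)%nat then
        let tl := t_round K N s epsl deltal in
        (s * (tl - tprev) +
         me_pulls f K N (s - (s - K + 1) / 2) (3 / 4 * epsl) (deltal / 2) tl)%nat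
      else O
  end.

Definition total_pulls (K N n : nat) (eps delta : R) : nat :=
  me_pulls n K N n (eps / 4) (delta / 2) O.

(* Main.v *)
Require Import Defs.
From Stdlib Require Import Reals Lra Lia ZArith.
Open Scope R_scope.

Lemma my_ln_le x y : 0 < x -> x <= y -> ln x <= ln y.
Proof. intros Hx [H|H]. left; now apply ln_increasing. subst; lra. Qed.

Lemma to_nat_bound z x : IZR z <= x + 1 -> 0 <= x + 1 -> INR (Z.to_nat z) <= x + 1.
Proof.
  intros H1 H2. destruct z as [|p|p].
  - simpl; lra.
  - rewrite INR_IZR_INZ, Z2Nat.id by lia. exact H1.
  - simpl; lra.
Qed.

Lemma ceil_bound x : 0 <= x -> INR (Z.to_nat (ceilZ x)) <= x + 1.
Proof.
  intros Hx. apply to_nat_bound; [|lra]. unfold ceilZ.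
  destruct (archimed x) as [A B].
  destruct (Req_EM_T (IZR (up x) - 1) x) as [E|E].
  - rewrite minus_IZR. lra.
  - lra.
Qed.

Lemma m_bound N u : (1 < N)%nat -> 0 <= u -> m_fun N u <= 2 * sqrt u * sqrt (INR N).
Proof.
  intros HN Hu. unfold m_fun. eapply Rle_trans; [apply Rmin_r|].
  assert (HN1 : 1 <= INR N) by (apply (le_INR 1); lia).
  pose proof (sqrt_sqrt u Hu) as Ea.
  pose proof (sqrt_sqrt (INR N) ltac:(lra)) as Eb.
  assert (b1 : 1 <= sqrt (INR N)).
  { rewrite <- sqrt_1. apply sqrt_le_1_alt. lra. }
  pose proof (sqrt_pos u) as a0.
  set (a := sqrt u) in *. set (b := sqrt (INR N)) in *.
  clearbody a b. rewrite <- Ea, <- Eb.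
  replace ((a * a + a * a / (b * b)) / (1 + a * a / (b * b)))
    with (a * a * (b * b + 1) / (b * b + a * a)) by (field; nra).
  assert (P : 0 < b * b + a * a) by nra.
  unfold Rdiv. apply Rmult_le_reg_r with (b*b + a*a); auto.
  rewrite Rmult_assoc, Rinv_l by lra.
  assert (Q1 : 0 <= a * b * ((a - b) * (a - b))).
  { apply Rmult_le_pos. apply Rmult_le_pos; lra. apply Rle_0_sqr. }
  assert (Q2 : 0 <= a * a * (3 * (b * b) - 1)).
  { apply Rmult_le_pos. apply Rle_0_sqr. nra. }
  nra.
Qed.

Definition hh (N : nat) (e d : R) := sqrt (INR N) * sqrt (ln (4 / d)) / e.

Lemma ln_big d : 0 < d <= 1/4 -> 4 * ln 2 <= ln (4 / d) /\ 1 <= ln (4 / d).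
Proof.
  intros Hd. assert (16 <= 4 / d).
  { apply Rmult_le_reg_r with d; try lra. unfold Rdiv; rewrite Rmult_assoc, Rinv_l; lra. }
  split.
  - replace (4 * ln 2) with (ln (2*2*2*2)).
    + apply my_ln_le; lra.
    + rewrite !ln_mult by lra. ring.
  - rewrite <- (ln_exp 1) at 1. apply my_ln_le. apply exp_pos. pose proof exp_le_3; lra.
Qed.

Lemma log_arg_bound K s d : (K < s)%nat -> 0 < d <= 1/4 ->
  0 <= ln ((2 * INR (s - K)) / (d * INR ((s - K) / 2 + 1))) <= ln (4 / d).
Proof.
  intros Hs Hd.
  pose proof (Nat.div_mod_eq (s-K) 2). pose proof (Nat.mod_upper_bound (s-K) 2).
  assert (n1 : (1 <= s - K)%nat) by lia.
  assert (n2 : (s - K <= 2 * ((s - K) / 2 + 1))%nat) by lia.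
  assert (n3 : (1 <= (s - K) / 2 + 1)%nat) by lia.
  assert (n4 : ((s - K) / 2 + 1 <= 2 * (s - K))%nat) by lia.
  apply le_INR in n1, n2, n3, n4. rewrite mult_INR in n2, n4. change (INR 2) with 2 in n4. change (INR 1) with 1 in n1, n3. change (INR 2) with 2 in n2.
  set (x := INR (s - K)) in *. set (y := INR ((s - K) / 2 + 1)) in *.
  clearbody x y.
  assert (Pd : 0 < d * y) by nra.
  assert (E : 2 * x / (d * y) = (2 * x / y) / d) by (field; lra).
  split.
  - rewrite <- ln_1. apply my_ln_le; [lra|].
    rewrite E. apply Rmult_le_reg_r with d; [lra|].
    unfold Rdiv. rewrite Rmult_assoc, Rinv_l by lra.
    apply Rmult_le_reg_r with y; [lra|].
    replace (2 * x * / y * 1 * y) with (2 * x) by (field; lra). nra.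
  - apply my_ln_le.
    + unfold Rdiv. apply Rmult_lt_0_compat; [lra|]. apply Rinv_0_lt_compat; lra.
    + rewrite E. unfold Rdiv. apply Rmult_le_compat_r. left; apply Rinv_0_lt_compat; lra.
      apply Rmult_le_reg_r with y; [lra|].
      rewrite Rmult_assoc, Rinv_l by lra. lra.
Qed.

Lemma t_round_bound K N s e d : (K < s)%nat -> (1 < N)%nat -> 0 < e <= 1 -> 0 < d <= 1/4 ->
  INR (t_round K N s e d) <= 4 * hh N e d.
Proof.
  intros Hs HN He Hd. unfold t_round, hh.
  destruct (log_arg_bound K s d Hs Hd) as [L0 L1].
  set (L := ln _) in L0, L1 |- *. clearbody L.
  destruct (ln_big d Hd) as [_ G1].
  set (G := ln (4 / d)) in *. clearbody G.
  assert (Hu : 0 <= 2 / e ^ 2 * L).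
  { apply Rmult_le_pos; [|lra]. unfold Rdiv. apply Rmult_le_pos; [lra|].
    left; apply Rinv_0_lt_compat, pow_lt; lra. }
  eapply Rle_trans; [apply ceil_bound|].
  { unfold m_fun. apply Rmin_glb.
    - apply Rmult_le_pos; [lra|]. left; apply Rinv_0_lt_compat.
      assert (0 <= 2 / e ^ 2 * L / INR N); [|lra].
      unfold Rdiv at 2. apply Rmult_le_pos; auto. left; apply Rinv_0_lt_compat, lt_0_INR; lia.
    - assert (0 <= 2 / e ^ 2 * L / INR N).
      { unfold Rdiv at 2. apply Rmult_le_pos; auto. left; apply Rinv_0_lt_compat, lt_0_INR; lia. }
      apply Rmult_le_pos; [lra|]. left; apply Rinv_0_lt_compat. lra. }
  eapply Rle_trans; [apply Rplus_le_compat_r, m_bound; auto|].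
  assert (HN1 : 1 <= INR N) by (apply (le_INR 1); lia).
  assert (b1 : 1 <= sqrt (INR N)).
  { rewrite <- sqrt_1. apply sqrt_le_1_alt. lra. }
  assert (w1 : 1 <= sqrt G).
  { rewrite <- sqrt_1. apply sqrt_le_1_alt. lra. }
  pose proof (sqrt_sqrt G ltac:(lra)) as EG.
  set (b := sqrt (INR N)) in *. set (w := sqrt G) in *. clearbody b w.
  assert (Su : sqrt (2 / e ^ 2 * L) <= 3 * w / (2 * e)).
  { rewrite <- (sqrt_square (3 * w / (2 * e))).
    2:{ unfold Rdiv; apply Rmult_le_pos; [lra|]. left; apply Rinv_0_lt_compat; lra. }
    apply sqrt_le_1_alt.
    replace (3 * w / (2 * e) * (3 * w / (2 * e))) with (9/4 * (w * w) / e ^ 2) by (field; lra).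
    rewrite EG. unfold Rdiv. rewrite (Rmult_comm 2), (Rmult_comm (9/4 * G)), Rmult_assoc.
    apply Rmult_le_compat_l. left; apply Rinv_0_lt_compat, pow_lt; lra. lra. }
  assert (V : 1 <= b * w / e).
  { apply Rmult_le_reg_r with e; [lra|]. unfold Rdiv. rewrite Rmult_assoc, Rinv_l by lra. nra. }
  assert (V2 : 2 * sqrt (2 / e ^ 2 * L) * b <= 3 * (b * w / e)).
  { replace (3 * (b * w / e)) with (2 * (3 * w / (2 * e)) * b) by (field; lra).
    apply Rmult_le_compat_r; lra. }
  lra.
Qed.

Lemma hh_step N e d : 0 < e -> 0 < d <= 1/4 -> hh N (3/4 * e) (d/2) <= 3/2 * hh N e d.
Proof.
  intros He Hd. unfold hh.
  destruct (ln_big d Hd) as [G0 G1].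
  assert (E8 : ln (4 / (d / 2)) = ln 2 + ln (4 / d)).
  { rewrite <- ln_mult. f_equal. field. lra. lra.
    unfold Rdiv; apply Rmult_lt_0_compat; [lra|]. apply Rinv_0_lt_compat; lra. }
  rewrite E8.
  pose proof (sqrt_sqrt (ln (4/d)) ltac:(lra)) as EG.
  assert (w1 : 0 <= sqrt (ln (4/d))) by apply sqrt_pos.
  assert (S1 : sqrt (ln 2 + ln (4 / d)) <= 9/8 * sqrt (ln (4/d))).
  { rewrite <- (sqrt_square (9/8 * sqrt (ln (4/d)))) by lra.
    apply sqrt_le_1_alt. nra. }
  set (w := sqrt (ln (4/d))) in *. set (w' := sqrt (ln 2 + ln (4 / d))) in *.
  pose proof (sqrt_pos (INR N)). set (b := sqrt (INR N)) in *.
  clearbody w w' b.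
  replace (3 / 2 * (b * w / e)) with (b * (9/8 * w) / (3/4 * e)) by (field; lra).
  unfold Rdiv. apply Rmult_le_compat_r. left; apply Rinv_0_lt_compat; lra.
  apply Rmult_le_compat_l; lra.
Qed.

Lemma hh_pos N e d : 0 < e -> 0 <= hh N e d.
Proof. intros. unfold hh, Rdiv. apply Rmult_le_pos. apply Rmult_le_pos; apply sqrt_pos.
  left; apply Rinv_0_lt_compat; lra. Qed.

Lemma main_ind K N (HN : (1 < N)%nat) : forall fuel s e d tp, 0 < e <= 1 -> 0 < d <= 1/4 ->
  INR (me_pulls fuel K N s e d tp) <= 16 * (INR K + 1) * INR (s - K) * hh N e d.
Proof.
  assert (K0 : 0 <= INR K) by apply pos_INR.
  induction fuel as [|f IH]; intros s e d tp He Hd; cbn [me_pulls].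
  - pose proof (hh_pos N e d ltac:(lra)). pose proof (pos_INR (s - K)).
    apply Rmult_le_pos; [|auto]. apply Rmult_le_pos; lra.
  - pose proof (hh_pos N e d ltac:(lra)) as Hh. pose proof (pos_INR (s - K)) as X0.
    destruct (Nat.ltb_spec K s) as [Hs|Hs].
    2:{ simpl. apply Rmult_le_pos; [|auto]. apply Rmult_le_pos; lra. }
    set (tl := t_round K N s e d).
    set (s' := (s - (s - K + 1) / 2)%nat).
    assert (IH' := IH s' (3/4*e) (d/2) tl ltac:(lra) ltac:(lra)).
    pose proof (hh_step N e d ltac:(lra) Hd) as Step.
    pose proof (hh_pos N (3/4*e) (d/2) ltac:(lra)) as Hh'.
    pose proof (t_round_bound K N s e d Hs HN He Hd) as T. fold tl in T.
    assert (ns : (s <= (K + 1) * (s - K))%nat) by nia.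
    assert (ns' : (2 * (s' - K) <= s - K)%nat).
    { unfold s'. pose proof (Nat.div_mod_eq (s-K+1) 2). pose proof (Nat.mod_upper_bound (s-K+1) 2). lia. }
    assert (nt : (tl - tp <= tl)%nat) by lia.
    apply le_INR in ns, ns', nt. rewrite mult_INR, plus_INR in ns. rewrite mult_INR in ns'.
    change (INR 1) with 1 in ns. change (INR 2) with 2 in ns'.
    rewrite plus_INR, mult_INR.
    pose proof (pos_INR s'). pose proof (pos_INR (s' - K)). pose proof (pos_INR tl).
    pose proof (pos_INR s).
    set (X := INR (s - K)) in *. set (X' := INR (s' - K)) in *. clearbody X X'.
    set (h := hh N e d) in *. set (h' := hh N (3/4*e) (d/2)) in *. clearbody h h'.
    assert (A1 : INR s * INR (tl - tp) <= (INR K + 1) * X * (4 * h)).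
    { eapply Rle_trans. apply Rmult_le_compat_l; [lra|exact nt].
      apply Rmult_le_compat; lra. }
    assert (A2 : 16 * (INR K + 1) * X' * h' <= 16 * (INR K + 1) * (X / 2) * (3/2 * h)).
    { apply Rmult_le_compat; try lra. apply Rmult_le_pos; lra.
      apply Rmult_le_compat_l; lra. }
    lra.
Qed.

Theorem corollary3 (K : nat) (HK : (1 <= K)%nat) :
  exists C : R,
    forall (n N : nat) (eps delta : R),
      (K <= n)%nat -> (1 < N)%nat ->
      0 < eps < 1 -> 0 < delta <= 1 / 2 ->
      INR (total_pulls K N n eps delta)
        <= C * (INR n * sqrt (INR N) / eps) * sqrt (ln (1 / delta)).
Proof.
  exists (128 * (INR K + 1)).
  intros n N eps delta Hn HN He Hd. unfold total_pulls.
  eapply Rle_trans. apply main_ind; auto; lra.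
  assert (K0 : 0 <= INR K) by apply pos_INR.
  assert (Hnk : INR (n - K) <= INR n) by (apply le_INR; lia).
  pose proof (pos_INR (n - K)).
  assert (D2 : 2 <= 1 / delta).
  { apply Rmult_le_reg_r with delta; [lra|]. unfold Rdiv. rewrite Rmult_assoc, Rinv_l; lra. }
  assert (L2 : ln 2 <= ln (1 / delta)) by (apply my_ln_le; lra).
  assert (l2 : 0 < ln 2) by (pose proof ln_lt_2; lra).
  assert (E8 : ln (4 / (delta / 2)) = ln 2 + ln 2 + ln 2 + ln (1 / delta)).
  { rewrite <- !ln_mult; try lra. f_equal. field. lra. }
  pose proof (sqrt_sqrt (ln (1/delta)) ltac:(lra)) as EG.
  assert (w1 : 0 <= sqrt (ln (1/delta))) by apply sqrt_pos.
  assert (S1 : sqrt (ln (4 / (delta / 2))) <= 2 * sqrt (ln (1/delta))).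
  { rewrite <- (sqrt_square (2 * sqrt (ln (1/delta)))) by lra.
    apply sqrt_le_1_alt. nra. }
  unfold hh.
  pose proof (sqrt_pos (INR N)).
  set (w := sqrt (ln (1/delta))) in *. set (w' := sqrt (ln (4 / (delta / 2)))) in *.
  set (b := sqrt (INR N)) in *. pose proof (sqrt_pos (ln (4 / (delta / 2)))). fold w' in H1.
  clearbody w w' b.
  assert (HB : b * w' / (eps / 4) <= 8 * (b * w / eps)).
  { replace (8 * (b * w / eps)) with (b * (2 * w) / (eps / 4)) by (field; lra).
    unfold Rdiv. apply Rmult_le_compat_r. left; apply Rinv_0_lt_compat; lra.
    apply Rmult_le_compat_l; lra. }
  assert (P : 0 <= b * w / eps).
  { unfold Rdiv. apply Rmult_le_pos. apply Rmult_le_pos; lra. left; apply Rinv_0_lt_compat; lra. }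
  assert (P' : 0 <= b * w' / (eps / 4)).
  { unfold Rdiv. apply Rmult_le_pos. apply Rmult_le_pos; lra. left; apply Rinv_0_lt_compat; lra. }
  replace (128 * (INR K + 1) * (INR n * b / eps) * w)
    with (16 * (INR K + 1) * INR n * (8 * (b * w / eps))) by (field; lra).
  apply Rmult_le_compat; try lra.
  - apply Rmult_le_pos; lra.
  - apply Rmult_le_compat_l; lra.
Qed.
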